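(* Let $n\ge3$ and let $q_1,\dots,q_n\ge2$ be integers such that $\prod_{k=1}^n\big(1+\frac{1}{q_k}\big)\ge n\log n$ (natural logarithm). Then $Q=[q_1]\times\cdots\times[q_n]$ can be covered by hyperplanes, each with a non-empty set of fixed coordinates, no two of which are parallel.
   Context: $[m]=\{1,\dots,m\}$. A hyperplane in $Q=S_1\times\cdots\times S_n$ is $A=A_1\times\cdots\times A_n$ with each $A_k$ either $S_k$ or a singleton in $S_k$; $F(A)=\{k:A_k\text{ is a singleton}\}$ is its set of fixed coordinates; two hyperplanes are parallel if they have the same set of fixed coordinates. *)

(* Defs.v *)
From Stdlib Require Import Reals.
From HB Require Import structures.
From mathcomp Require Import all_boot all_order all_algebra.
From mathcomp Require Import Rstruct.
Set Implicit Arguments. Unset Strict Implicit. Unset Printing Implicit Defensive.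

(* Coordinates are indexed by 'I_n; the k-th factor [q_k] is encoded as
   {0, ..., q k - 1} (a relabelling of {1,...,q_k}). *)

Definition in_box (n : nat) (q : 'I_n -> nat) (x : 'I_n -> nat) : Prop :=
  forall k, x k < q k.

(* A hyperplane is encoded by its set F of fixed coordinates together with
   the fixed values (values outside F are irrelevant). *)
Definition hyperplane (n : nat) := ({set 'I_n} * {ffun 'I_n -> nat})%type.

Definition fixed_coords (n : nat) (A : hyperplane n) : {set 'I_n} := A.1.

Definition is_hyperplane (n : nat) (q : 'I_n -> nat) (A : hyperplane n) : Prop :=
  forall k, k \in A.1 -> A.2 k < q k.

Definition in_hyperplane (n : nat) (A : hyperplane n) (x : 'I_n -> nat) : Prop :=
  forall k, k \in A.1 -> x k = A.2 k.

Definition parallel (n : nat) (A B : hyperplane n) : Prop :=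
  fixed_coords A = fixed_coords B.

(* Main.v *)
Require Import Defs.
From Stdlib Require Import Reals.
From HB Require Import structures.
From mathcomp Require Import all_boot all_order all_algebra.
From mathcomp Require Import Rstruct.
From mathcomp Require Import lra zify.
Set Implicit Arguments. Unset Strict Implicit.
Import Order.TTheory GRing.Theory Num.Theory.
Local Open Scope ring_scope.
Arguments exp _%_ring_scope.
Arguments ln _%_ring_scope.

Lemma exp_ge1x (x : R) : 1 + x <= exp x.
Proof. apply/RleP; exact: exp_ineq1_le. Qed.

Lemma exp_gt0 (x : R) : 0 < exp x.
Proof. apply/RltP; exact: exp_pos. Qed.

Lemma exp_ltE (x y : R) : x < y -> exp x < exp y.
Proof. by move=> /RltP h; apply/RltP; apply: exp_increasing. Qed.

Lemma exp_leE (x y : R) : x <= y -> exp x <= exp y.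
Proof.
rewrite le_eqVlt => /orP[/eqP -> //|/exp_ltE]; exact: ltW.
Qed.

Lemma exp_le_inv (x y : R) : exp x <= exp y -> x <= y.
Proof.
move=> h; rewrite leNgt; apply/negP => /exp_ltE; by rewrite ltNge h.
Qed.

Lemma exp_lt_inv (x y : R) : exp x < exp y -> x < y.
Proof.
move=> h; rewrite ltNge; apply/negP => /exp_leE; by rewrite leNgt h.
Qed.

Lemma lnK (x : R) : 0 < x -> exp (ln x) = x.
Proof. by move=> /RltP h; apply: exp_ln. Qed.

Lemma expD' (x y : R) : exp (x + y) = exp x * exp y.
Proof. by rewrite expRD. Qed.

Lemma expN' (x : R) : exp (- x) = (exp x)^-1.
Proof.
have h := exp_gt0 x.
apply: (mulfI (x := exp x)); first by rewrite gt_eqF.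
by rewrite -expD' addrN divff ?gt_eqF // expR0.
Qed.

Lemma ln_le' (x y : R) : 0 < x -> x <= y -> ln x <= ln y.
Proof.
move=> hx hxy; apply: exp_le_inv; rewrite !lnK //; exact: lt_le_trans hxy.
Qed.

Lemma ln_sub1 (x : R) : 0 < x -> ln x <= x - 1.
Proof.
move=> hx; apply: exp_le_inv; rewrite lnK //.
by have := exp_ge1x (x - 1); rewrite addrC subrK.
Qed.

Lemma lnM' (x y : R) : 0 < x -> 0 < y -> ln (x * y) = ln x + ln y.
Proof. by move=> /RltP hx /RltP hy; rewrite ln_mult. Qed.

Lemma ln_prod (I : finType) (P : pred I) (F : I -> R) :
  (forall i, P i -> 0 < F i) ->
  0 < \prod_(i | P i) F i /\ ln (\prod_(i | P i) F i) = \sum_(i | P i) ln (F i).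
Proof.
move=> hF.
apply: (big_rec2 (fun p s => 0 < p /\ ln p = s)).
  split; first exact: ltr01.
  by apply/ln_1.
move=> i p s Pi [hp hs]; split; first by rewrite mulr_gt0 // hF.
by rewrite lnM' ?hF // hs.
Qed.

Lemma prod_exp_le (I : finType) (P : pred I) (t : I -> R) :
  (forall i, P i -> 0 <= t i <= 1) ->
  \prod_(i | P i) (1 - t i) <= exp (- \sum_(i | P i) t i).
Proof.
move=> ht.
suff [] : 0 <= \prod_(i | P i) (1 - t i) /\ \prod_(i | P i) (1 - t i) <= exp (- \sum_(i | P i) t i) by [].
apply: (big_rec2 (fun p s => 0 <= p /\ p <= exp (- s))).
  by split; [exact: ler01 | rewrite oppr0 expR0].
move=> i p s Pi [hp hs]; have /andP[t0 t1] := ht i Pi; split.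
  by apply: mulr_ge0 => //; rewrite subr_ge0.
rewrite opprD expD'; apply: ler_pM => //; first by rewrite subr_ge0.
by have := exp_ge1x (- t i).
Qed.

Lemma exp_lt3 : exp 1 < 3.
Proof.
have he := exp_gt0 (1/8)%R.
have h1 : exp (1/8) <= 8/7.
  have := exp_ge1x (- (1/8))%R; rewrite expN' => h.
  have h2 : (1 - 1/8) * exp (1/8) <= (exp (1/8))^-1 * exp (1/8).
    by apply: ler_wpM2r; [exact: ltW | exact: h].
  rewrite mulVf ?gt_eqF // in h2; lra.
have -> : exp 1 = exp (1/8) ^+ 8.
  by rewrite expRX -mulr_natr; congr exp; lra.
apply: (le_lt_trans (y := ((8/7)^+8)%R)); last by rewrite !exprS !expr0; lra.
apply: lerXn2r; [by rewrite nnegrE ltW | by rewrite nnegrE; lra | exact: h1].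
Qed.

Lemma exp_pow (x : R) (k : nat) : exp x ^+ k = exp (x * k%:R).
Proof. by rewrite expRX mulr_natr. Qed.

Lemma ln4 : 5/4 <= ln 4.
Proof.
have h : exp (5/4) <= 4.
  have he : exp (5/4) \is Num.nneg by rewrite nnegrE; exact: ltW (exp_gt0 _).
  have h4 : 4 \is @Num.nneg R by rewrite nnegrE; lra.
  rewrite -(ler_pXn2r (n:=4) isT he h4).
  rewrite exp_pow (_ : 5/4 * 4%:R = 1 * 5%:R); last by lra.
  rewrite -exp_pow.
  apply: (le_trans (y := (3 ^+ 5)%R)).
    apply: lerXn2r; [by rewrite nnegrE; exact: ltW (exp_gt0 _) | by rewrite nnegrE; lra | by apply/RleP; exact: exp_le_3].
  by rewrite !exprS !expr0; lra.
have := ln_le' (exp_gt0 _) h; by rewrite ln_exp.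
Qed.

Lemma ln5 : 4/3 < ln 5.
Proof.
have h : exp (4/3) < 5.
  rewrite ltNge; apply/negP => h.
  have h2 : 5 ^+ 3 <= exp (4/3) ^+ 3.
    apply: lerXn2r; [by rewrite nnegrE; lra | by rewrite nnegrE; exact: ltW (exp_gt0 _) | exact: h].
  rewrite exp_pow (_ : 4/3 * 3%:R = 1 * 4%:R) in h2; last by lra.
  rewrite -exp_pow in h2.
  have h3 : exp 1 ^+ 4 <= 3 ^+ 4.
    apply: lerXn2r; [by rewrite nnegrE; exact: ltW (exp_gt0 _) | by rewrite nnegrE; lra | by apply/RleP; exact: exp_le_3].
  move: h2 h3; rewrite !exprS !expr0; lra.
have /RltP := h; move/(ln_increasing _ _ (exp_pos _)); rewrite ln_exp => /RltP; done.
Qed.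

Lemma poly3 (q n : nat) : (2 <= q -> q <= n -> (q+1)^3 * n^2 <= (n+1)^3 * q^2)%N.
Proof. move=> h1 /subnKC <-. set d := (n - q)%N.
have h3 : (4 * (q + d) * q <= (q+d)^2 * q^2)%N by nia.
nia. Qed.

Lemma cube_le (q n : nat) : (2 <= q)%N -> (q <= n)%N ->
  (q%:R : R) * (1 + (q%:R)^-1) ^+ 3 <= n%:R * (1 + (n%:R)^-1) ^+ 3.
Proof.
move=> h2 hqn.
have qp : 0 < q%:R :> R by rewrite ltr0n; apply: leq_trans h2.
have np : 0 < n%:R :> R by rewrite ltr0n; apply: leq_trans hqn; apply: leq_trans h2.
have E (y : R) : 0 < y -> y * (1 + y^-1) ^+ 3 = (y + 1) ^+ 3 / y ^+ 2.
  move=> y0; have yn : y != 0 by rewrite gt_eqF.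
  have -> : 1 + y^-1 = (y + 1) / y by rewrite mulrDl divff // mul1r addrC.
  by rewrite expr_div_n [y ^+ 3]exprS invfM mulrCA (mulrA y) mulfV // mul1r.
rewrite !E //.
have key : ((q + 1)%:R : R) ^+ 3 * n%:R ^+ 2 <= (n + 1)%:R ^+ 3 * q%:R ^+ 2.
  by rewrite -!natrX -!natrM ler_nat poly3.
rewrite !natrD in key.
rewrite ler_pdivlMr ?exprn_gt0 // mulrAC ler_pdivrMr ?exprn_gt0 //.
Qed.

Definition Kset (n : nat) (q : 'I_n -> nat) : {set 'I_n} := [set k | (q k <= n)%N].
Arguments Kset {n}.

Lemma ln_1px (x : R) : 0 <= x -> ln (1 + x) <= x.
Proof.
move=> x0; have := @ln_sub1 (1 + x)%R; rewrite addrC addrK; apply.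
lra.
Qed.

Lemma ln_cube (x y : R) : 0 < x -> 0 < y -> ln (x * y ^+ 3) = ln x + 3 * ln y.
Proof.
move=> x0 y0; rewrite exprS expr2 !lnM' ?mulr_gt0 //; lra.
Qed.

Lemma key4 (n : nat) (q : 'I_n -> nat) :
  (4 <= n)%N -> (forall k : 'I_n, (2 <= q k)%N) ->
  n%:R * ln n%:R <= \prod_(k < n) (1 + (q k)%:R^-1) ->
  \prod_(k in Kset q) (q k)%:R < exp (\prod_(k in Kset q) (1 + (q k)%:R^-1) - 1).
Proof.
move=> n4 hq hP.
set K := Kset q.
have qpos k : 0 < (q k)%:R :> R by rewrite ltr0n; apply: leq_trans (hq k).
have fpos k : 0 < 1 + (q k)%:R^-1 :> R.
  by have := qpos k; rewrite -invr_gt0; lra.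
have [PKpos PKln] := @ln_prod _ (fun k => k \in K) (fun k => 1 + (q k)%:R^-1) (fun k _ => fpos k).
have [NKpos NKln] := @ln_prod _ (fun k => k \in K) (fun k => (q k)%:R) (fun k _ => qpos k).
have [Ppos Pln] := @ln_prod _ predT (fun k => 1 + (q k)%:R^-1) (fun k _ => fpos k).
rewrite -(lnK NKpos) -(lnK PKpos) NKln PKln; apply: exp_ltE.
set u := fun k => ln (1 + (q k)%:R^-1).
set s := \sum_(k in K) u k.
set A := \sum_(k in K) ln (q k)%:R.
set nR := (n%:R : R).
set L := ln nR.
have n4R : 4 <= nR by rewrite /nR (ler_nat R 4 n).
have hL : 5/4 <= L.
  apply: le_trans ln4 _; apply: ln_le' => //; lra.
have nLpos : 0 < nR * L by apply: mulr_gt0; lra.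
have hnl : 4/3 < ln (nR * L).
  apply: lt_le_trans ln5 _; apply: ln_le' => //; nra.
have F1 : forall k, k \in K -> ln (q k)%:R + 3 * u k <= L + 3 / nR.
  move=> k; rewrite inE => hk.
  have c := cube_le (hq k) hk.
  have := ln_le' (mulr_gt0 (qpos k) (exprn_gt0 3 (fpos k))) c.
  have np : 0 < nR by lra.
  have npos : 0 < 1 + nR^-1 by have := np; rewrite -invr_gt0; lra.
  rewrite !ln_cube // => hc.
  have := @ln_1px (nR^-1)%R; rewrite invr_ge0 => /(_ (ltW np)) hl.
  rewrite /u /L /nR; move: hl; rewrite /nR => hl.
  move: hc hl; rewrite /u /L /nR; lra.
have F2 : forall k, k \notin K -> u k <= (nR + 1)^-1.
  move=> k; rewrite inE -ltnNge => hk.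
  apply: le_trans (ln_1px _) _; first by rewrite invr_ge0 ltW.
  rewrite lef_pV2 ?posrE ?qpos //; last lra.
  by rewrite /nR natr1 ler_nat.
have hA : A + 3 * s <= #|K|%:R * (L + 3 / nR).
  rewrite /A /s mulr_sumr -big_split /=.
  apply: (le_trans (y := \sum_(k in K) (L + 3 / nR))).
    by apply: ler_sum => k hk; exact: F1 k hk.
  by rewrite sumr_const [leRHS]mulr_natl.
have hsplit : \sum_(k < n) u k = s + \sum_(k in ~: K) u k.
  by rewrite (bigID (fun k => k \in K)) /=; congr (_ + _); apply: eq_bigl => k; rewrite ?inE.
have hB : \sum_(k in ~: K) u k <= #|~: K|%:R * (nR + 1)^-1.
  apply: (le_trans (y := \sum_(k in ~: K) (nR + 1)^-1)).
    by apply: ler_sum => k; rewrite inE; exact: F2.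
  by rewrite sumr_const [leRHS]mulr_natl.
have hcard : #|K|%:R + #|~: K|%:R = nR.
  by rewrite -natrD cardsC card_ord.
have [_ Pln'] := @ln_prod _ (fun _ => true) (fun k => 1 + (q k)%:R^-1) (fun k _ => fpos k).
have hs : ln (nR * L) <= s + #|~: K|%:R / (nR + 1).
  have := ln_le' nLpos hP; rewrite Pln' hsplit; move: hB; lra.
set m := #|K|%:R in hA hcard.
set j := #|~: K|%:R in hB hcard hs.
have np : 0 < nR by lra.
have hz : nR * nR^-1 = 1 by rewrite divff // gt_eqF.
have hz0 : 0 < nR^-1 by rewrite invr_gt0.
set z := nR^-1 in hz hz0 hA.
set y := j / (nR + 1) in hs.
have hy : y * (nR + 1) = j by rewrite /y divfK // gt_eqF //; lra.
have j0 : 0 <= j by rewrite /j ler0n.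
have y0 : 0 <= y by rewrite /y divr_ge0 //; lra.
have hjz : j * z = y + y * z.
  by rewrite -hy mulrDr mulr1 mulrDl -mulrA hz mulr1.
have hyz : 0 <= y * z by rewrite mulr_ge0 // ltW.
have hE : nR * L * (1 - y) <= exp s.
  have h1 : exp (ln (nR * L) + - y) <= exp s by apply: exp_leE; lra.
  rewrite expD' lnK // in h1; apply: le_trans h1.
  by apply: ler_wpM2l; [exact: ltW | have := exp_ge1x (- y)%R; lra].
have hmL : m * L = nR * L - j * L.
  by rewrite -hcard; lra.
have hmz : m * z = 1 - j * z.
  by rewrite -hz -hcard; lra.
have h1 : nR * L * y <= j * L.
  have : nR * y <= j by rewrite -hy; lra.
  have L0 : 0 <= L by lra.
  move=> h; have := ler_wpM2r L0 h; lra.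
lra.
Qed.

Lemma key3 (n : nat) (q : 'I_n -> nat) :
  (n = 3)%N -> (forall k : 'I_n, (2 <= q k)%N) ->
  n%:R * ln n%:R <= \prod_(k < n) (1 + (q k)%:R^-1) ->
  \prod_(k in Kset q) (q k)%:R < exp (\prod_(k in Kset q) (1 + (q k)%:R^-1) - 1).
Proof.
move=> n3 hq hP; subst n.
have e3 : exp 1 < 3 := exp_lt3.
have ln3 : 1 < ln 3.
  have /RltP h := e3; have := @ln_increasing _ _ (exp_pos 1) h; rewrite ln_exp => /RltP; done.
have qpos k : 0 < (q k)%:R :> R by rewrite ltr0n; apply: leq_trans (hq k).
have fpos k : 0 < 1 + (q k)%:R^-1 :> R.
  by have := qpos k; rewrite -invr_gt0; lra.
have fle k : 1 + (q k)%:R^-1 <= 3/2 :> R.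
  have : (q k)%:R^-1 <= 2^-1 :> R.
    by rewrite lef_pV2 ?posrE ?qpos // ?(ler_nat R 2) ?hq //; lra.
  lra.
have all2 : forall k, q k = 2%N.
  move=> k0; apply/eqP; rewrite eqn_leq hq andbT leqNgt; apply/negP => h3.
  have : \prod_k (1 + (q k)%:R^-1) <= 3 :> R.
    rewrite (bigD1 k0) //=.
    have b1 : 1 + (q k0)%:R^-1 <= 4/3 :> R.
      have : (q k0)%:R^-1 <= 3^-1 :> R.
        by rewrite lef_pV2 ?posrE ?qpos // ?(ler_nat R 3) ?hq //; lra.
      lra.
    have b2 : \prod_(k | k != k0) (1 + (q k)%:R^-1) <= (3/2)^+2 :> R.
      apply: (le_trans (y := \prod_(k | k != k0) (3/2)%R)).
        by apply: ler_prod => k _; rewrite ltW ?fpos ?fle.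
      rewrite (eq_bigl (fun k => k \in [pred k | k != k0])) // prodr_const.
      by rewrite cardC1 card_ord.
    have b3 : 0 <= \prod_(k | k != k0) (1 + (q k)%:R^-1) :> R.
      by apply: prodr_ge0 => k _; exact: ltW.
    apply: (le_trans (y := 4/3 * (3/2)^+2)); last by rewrite !exprS !expr0; lra.
    by apply: ler_pM => //; exact: ltW.
  move: hP; lra.
have KT : Kset q = setT by apply/setP => k; rewrite !inE all2.
have e1 : \prod_(k in Kset q) (q k)%:R = 8 :> R.
  rewrite (eq_bigr (fun _ => 2%:R)) => [|k _]; last by rewrite all2.
  by rewrite prodr_const KT cardsT card_ord !exprS expr0; lra.
have e2 : \prod_(k in Kset q) (1 + (q k)%:R^-1) = \prod_k (1 + (q k)%:R^-1) :> R.
  by apply: eq_bigl => k; rewrite KT inE.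
rewrite e1 e2.
apply: (lt_le_trans (y := exp (ln 3 * 3%:R + - 1)%R)); last by apply: exp_leE; move: hP; lra.
rewrite expD' -exp_pow lnK // expN' ltr_pdivlMr ?exp_gt0 //.
have := exp_le_3; move/RleP; rewrite !exprS expr0; lra.
Qed.

Lemma key (n : nat) (q : 'I_n -> nat) :
  (3 <= n)%N -> (forall k : 'I_n, (2 <= q k)%N) ->
  n%:R * ln n%:R <= \prod_(k < n) (1 + (q k)%:R^-1) ->
  \prod_(k in Kset q) (q k)%:R < exp (\prod_(k in Kset q) (1 + (q k)%:R^-1) - 1).
Proof.
move=> h3; case: (leqP 4 n) => h4; first exact: key4.
by apply: key3; apply/eqP; rewrite eqn_leq h3 -ltnS h4.
Qed.

Lemma subset_sum (n : nat) (K : {set 'I_n}) (t : 'I_n -> R) :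
  \sum_(F in [set F : {set 'I_n} | (F \subset K) && (F != set0)]) \prod_(k in F) t k
  = \prod_(k in K) (1 + t k) - 1.
Proof.
have := @bigA_distr R 0 1 *%R +%R _ (fun k => if k \in K then t k else 0) (fun _ => 1).
have L1 : \prod_i ((if i \in K then t i else 0) + 1) = \prod_(k in K) (1 + t k).
  rewrite [RHS]big_mkcond; apply: eq_bigr => i _.
  by case: ifP => _; [exact: addrC | exact: add0r].
have L2 (J : {set 'I_n}) : \prod_i (if i \in J then if i \in K then t i else 0 else 1)
    = if J \subset K then \prod_(i in J) t i else 0.
  case: ifP => hJ.
    rewrite [RHS]big_mkcond; apply: eq_bigr => i _.
    by case: ifP => // iJ; rewrite (subsetP hJ).
  case/subsetPn: (negbT hJ) => i iJ iK.
  by rewrite (bigD1 i) //= iJ (negbTE iK) mul0r.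
rewrite L1 => ->.
under eq_bigr do rewrite L2.
rewrite -big_mkcondr.
rewrite [in RHS](bigD1 set0) /=; last by rewrite sub0set.
rewrite big_set0 [1 + _]addrC addrK.
by apply: eq_bigl => J; rewrite !inE andbC.
Qed.

Lemma final_bound (n : nat) (q : 'I_n -> nat) :
  (3 <= n)%N -> (forall k : 'I_n, (2 <= q k)%N) ->
  n%:R * ln n%:R <= \prod_(k < n) (1 + (q k)%:R^-1) ->
  (\prod_(k in Kset q) (q k)%:R) *
  \prod_(F in [set F : {set 'I_n} | (F \subset Kset q) && (F != set0)])
     (1 - (\prod_(k in F) (q k)%:R)^-1) < 1 :> R.
Proof.
move=> h3 hq hP.
have hk := key h3 hq hP.
set S := [set F : {set 'I_n} | (F \subset Kset q) && (F != set0)].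
have ge1 (F : {set 'I_n}) : 1 <= \prod_(k in F) (q k)%:R :> R.
  elim/big_ind: _ => //; first by move=> x y; apply: mulr_ege1.
  by move=> k _; rewrite ler1n; apply: leq_trans (hq k).
have ht : forall F, F \in S -> 0 <= (\prod_(k in F) ((q k)%:R : R))^-1 <= 1.
  move=> F _; apply/andP; split; first by rewrite invr_ge0; exact: le_trans (ge1 F).
  by rewrite invf_le1 ?(lt_le_trans ltr01 (ge1 F)) ?ge1.
have hle := @prod_exp_le _ (fun F => F \in S) (fun F => (\prod_(k in F) (q k)%:R)^-1) ht.
have hsum : \sum_(F in S) (\prod_(k in F) (q k)%:R)^-1
   = \prod_(k in Kset q) (1 + (q k)%:R^-1) - 1 :> R.
  have H : \sum_(F in S) \prod_(k in F) ((q k)%:R : R)^-1 = \prod_(k in Kset q) (1 + (q k)%:R^-1) - 1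
    := subset_sum (Kset q) (fun k => (q k)%:R^-1).
  rewrite -H.
  by apply: eq_bigr => F _; rewrite prodfV.
rewrite hsum in hle.
have NK : 0 < \prod_(k in Kset q) (q k)%:R :> R.
  by apply: prodr_gt0 => k _; rewrite ltr0n; apply: leq_trans (hq k).
apply: le_lt_trans; first by apply: ler_wpM2l; [exact: ltW | exact: hle].
set E := \prod_(k in Kset q) (1 + (q k)%:R^-1) - 1.
by rewrite expN' ltr_pdivrMr ?exp_gt0 // mul1r.
Qed.

Definition vals (n M : nat) (q : 'I_n -> nat) (k : 'I_n) : {pred 'I_M.+1} :=
  fun i : 'I_M.+1 => (nat_of_ord i < q k)%N.
Arguments vals {n} M q k.

Lemma card_vals (n M : nat) (q : 'I_n -> nat) (k : 'I_n) :
  (q k <= M.+1)%N -> #|vals M q k| = q k.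
Proof.
move=> h.
have inj : injective (widen_ord h).
  by move=> x y /(congr1 val) /= /val_inj.
rewrite -[RHS](card_ord (q k)) -(card_image inj); apply: eq_card => i.
rewrite unfold_in /=; apply/idP/imageP.
  by move=> hi; exists (Ordinal hi) => //; apply: val_inj.
by case=> j _ ->; rewrite /= ltn_ord.
Qed.

Lemma card_pfam (n M : nat) (q : 'I_n -> nat) (F : {set 'I_n}) :
  (forall k, q k <= M.+1)%N ->
  #|pfamily (ord0 : 'I_M.+1) F (vals M q)| = (\prod_(k in F) q k)%N.
Proof.
move=> h; rewrite card_pfamily /image_mem foldrE big_map big_enum /=.
by apply: eq_bigr => k _; rewrite card_vals.
Qed.

Lemma pigeon (T U : finType) (A : {set T}) (S : {set U}) (r : T -> U) (u0 : U) :
  u0 \in S -> (forall x, x \in A -> r x \in S) ->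
  exists2 a, a \in S & (#|A| <= #|S| * #|[set x in A | r x == a]|)%N.
Proof.
move=> u0S hr.
have hpart : #|A| = (\sum_(a in S) #|[set x in A | r x == a]|)%N.
  rewrite -sum1_card (partition_big r (mem S)) //=.
  apply: eq_bigr => a _; rewrite -sum1_card; apply: eq_bigl => x.
  by rewrite inE.
case: (pickP [pred a | (a \in S) && (#|A| <= #|S| * #|[set x in A | r x == a]|)%N]).
  by move=> a /andP[aS ha]; exists a.
move=> hn; exfalso.
have h1 : (\sum_(a in S) (#|S| * #|[set x in A | r x == a]| + 1) <= \sum_(a in S) #|A|)%N.
  apply: leq_sum => a aS; rewrite addn1; have := hn a; rewrite /= aS /= => /negbT; rewrite -ltnNge.
  done.
move: h1; rewrite sum_nat_const big_split /= -big_distrr /= -hpart sum_nat_const.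
have : (0 < #|S|)%N by apply/card_gt0P; exists u0.
nia.
Qed.

Definition restr (n M : nat) (F : {set 'I_n}) (y : {ffun 'I_n -> 'I_M.+1}) :
  {ffun 'I_n -> 'I_M.+1} := [ffun k => if k \in F then y k else ord0].

Definition cov (n M : nat) (A : hyperplane n) (y : {ffun 'I_n -> 'I_M.+1}) : bool :=
  [forall k, (k \in A.1) ==> (nat_of_ord (y k) == A.2 k)].

Definition hyp_of (n M : nat) (F : {set 'I_n}) (a : {ffun 'I_n -> 'I_M.+1}) : hyperplane n :=
  (F, [ffun k => nat_of_ord (a k)]).

Lemma prod_q_ge1 (n : nat) (q : 'I_n -> nat) (G : {set 'I_n}) :
  (forall k, 0 < q k)%N -> 1 <= \prod_(k in G) ((q k)%:R : R).
Proof.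
move=> hq; elim/big_ind: _ => //; first by move=> x y; apply: mulr_ege1.
by move=> k _; rewrite ler1n.
Qed.

Lemma greedy (n M : nat) (q : 'I_n -> nat) (K : {set 'I_n}) (L : seq {set 'I_n}) :
  (forall k, 0 < q k <= M.+1)%N -> all (fun F : {set 'I_n} => F \subset K) L ->
  forall U : {set {ffun 'I_n -> 'I_M.+1}},
  U \subset pfamily (ord0 : 'I_M.+1) K (vals M q) ->
  exists hs : seq (hyperplane n),
   [/\ map fst hs = L, (forall A, A \in hs -> is_hyperplane q A) &
    (#|[set y in U | ~~ has (fun A => cov A y) hs]|%:R : R)
       <= #|U|%:R * \prod_(F <- L) (1 - (\prod_(k in F) ((q k)%:R : R))^-1)].
Proof.
move=> hq; elim: L => [|F L IH] hall U hU.
  exists [::]; split => //; rewrite big_nil mulr1 ler_nat.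
  by apply: subset_leq_card; apply/subsetP => y; rewrite inE => /andP[].
move: hall => /= /andP[hF hall].
set S := [set a in pfamily (ord0 : 'I_M.+1) F (vals M q)].
have u0S : [ffun=> ord0] \in S.
  rewrite inE; apply/pfamilyP; split.
    by apply/subsetP => k; rewrite inE ffunE eqxx.
  by move=> k _; rewrite ffunE unfold_in /=; case/andP: (hq k).
have hr : forall y, y \in U -> restr F y \in S.
  move=> y /(subsetP hU) /pfamilyP [_ hy]; rewrite inE; apply/pfamilyP; split.
    by apply/subsetP => k; rewrite inE ffunE; case: ifP => //; rewrite eqxx.
  by move=> k kF; rewrite ffunE kF; apply: hy; apply: (subsetP hF).
have [a aS hcnt] := pigeon u0S hr.
set C := [set x in U | restr F x == a] in hcnt.
have [|hs [hmap hhyp hcard]] := IH hall (U :\: C).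
  by apply: subset_trans hU; apply: subsetDl.
exists (hyp_of F a :: hs); split.
- by rewrite /= hmap.
- move=> A; rewrite inE => /orP[/eqP -> | /hhyp //].
  move=> k /= kF; rewrite ffunE.
  by move: aS; rewrite inE => /pfamilyP [_ /(_ k kF)]; rewrite unfold_in.
- have sub : [set y in U | ~~ has (fun A => cov A y) (hyp_of F a :: hs)]
      \subset [set y in U :\: C | ~~ has (fun A => cov A y) hs].
    apply/subsetP => y; rewrite !inE /= negb_or => /andP[yU /andP[ncov nhs]].
    rewrite nhs yU !andbT; apply/negP => /eqP ha; move/negP: ncov; apply.
    apply/forallP => k; apply/implyP => /= kF; rewrite ffunE -ha ffunE kF.
    done.
  apply: le_trans (_ : #|[set y in U :\: C | ~~ has (fun A => cov A y) hs]|%:R <= _).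
    by rewrite ler_nat; apply: subset_leq_card.
  apply: le_trans hcard _; rewrite big_cons mulrA.
  apply: ler_wpM2r.
    have hq0 k : (0 < q k)%N by case/andP: (hq k).
    apply: prodr_ge0 => G _; rewrite subr_ge0 invf_le1 ?prod_q_ge1 //.
    exact: lt_le_trans ltr01 (prod_q_ge1 G hq0).
  have cU : (#|C| <= #|U|)%N.
    by apply: subset_leq_card; apply/subsetP => x; rewrite inE => /andP[].
  have -> : #|U :\: C| = (#|U| - #|C|)%N.
    rewrite cardsD (setIidPr _) //; apply/subsetP => x; rewrite inE => /andP[].
    done.
  rewrite natrB // -natr_prod.
  have hq0 k : (0 < q k)%N by case/andP: (hq k).
  have Qp : 0 < (\prod_(k in F) q k)%N%:R :> R.
    by rewrite ltr0n; apply: prodn_gt0.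
  have hc : #|U|%:R <= (\prod_(k in F) q k)%N%:R * #|C|%:R :> R.
    have cS : #|S| = (\prod_(k in F) q k)%N.
      by rewrite cardsE card_pfam // => k; case/andP: (hq k).
    by rewrite -natrM ler_nat -cS.
  have h2 : #|U|%:R / (\prod_(k in F) q k)%N%:R <= #|C|%:R :> R.
    by rewrite ler_pdivrMr // mulrC.
  move: h2; lra.
Qed.

Lemma uniq_map_eq (T1 T2 : eqType) (f : T1 -> T2) (s : seq T1) (x y : T1) :
  uniq (map f s) -> x \in s -> y \in s -> f x = f y -> x = y.
Proof.
elim: s => //= z s IH /andP[hz hu]; rewrite !inE.
case/orP=> [/eqP->|xs]; case/orP=> [/eqP->|ys] e //.
- by move: hz; rewrite e (map_f f ys).
- by move: hz; rewrite -e (map_f f xs).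
- exact: IH.
Qed.

Arguments exp _%_R_scope.
Arguments ln _%_R_scope.
Local Close Scope ring_scope.

Theorem lemma4p2 (n : nat) (q : 'I_n -> nat) :
  3 <= n ->
  (forall k, 2 <= q k) ->
  ((n%:R : R) * ln (n%:R) <= \prod_(k < n) (1 + ((q k)%:R : R)^-1))%R ->
  exists H : seq (hyperplane n),
    [/\ forall A, A \in H -> is_hyperplane q A /\ fixed_coords A != set0,
        (* no two hyperplanes of the family are parallel *)
        forall A B, A \in H -> B \in H -> A <> B -> ~ parallel A B
      & forall x, in_box q x -> exists2 A, A \in H & in_hyperplane A x].
Proof.
move=> h3 hq hP.
have hfb := final_bound h3 hq hP.
set K := Kset q in hfb.
set M := (\max_(k < n) q k)%N.
have hqM : forall k, (0 < q k <= M.+1)%N.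
  move=> k; apply/andP; split; first by apply: leq_trans (hq k).
  by apply: leq_trans (leqnSn _); rewrite /M (bigD1 k) //= leq_maxl.
set S := [set F : {set 'I_n} | (F \subset K) && (F != set0)] in hfb.
have hall : all (fun F : {set 'I_n} => F \subset K) (enum S).
  by apply/allP => F; rewrite mem_enum inE => /andP[].
set D := [set y in pfamily (ord0 : 'I_M.+1) K (vals M q)].
have [hs [hmap hhyp hcard]] := greedy hqM hall (U := D)
   ltac:(by apply/subsetP => y; rewrite inE).
have hD : #|D| = (\prod_(k in K) q k)%N.
  by rewrite cardsE card_pfam // => k; case/andP: (hqM k).
have u0 : #|[set y in D | ~~ has (fun A => cov A y) hs]| = 0.
  apply/eqP; rewrite -leqn0 -ltnS -(ltr_nat R).
  apply: le_lt_trans hcard _; rewrite hD natr_prod big_enum /=.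
  exact: hfb.
exists hs; split.
- move=> A hA; split; first exact: hhyp.
  have : A.1 \in map fst hs by apply: map_f.
  by rewrite hmap mem_enum inE => /andP[_].
- move=> A B hA hB hAB hpar; apply: hAB.
  apply: (uniq_map_eq (f := fst) (s := hs)) => //.
  by rewrite hmap enum_uniq.
- move=> x hx.
  pose y : {ffun 'I_n -> 'I_M.+1} := [ffun k => if k \in K then inord (x k) else ord0].
  have xM k : x k < M.+1 by apply: leq_trans (hx k) _; case/andP: (hqM k).
  have yD : y \in D.
    rewrite inE; apply/pfamilyP; split.
      by apply/subsetP => k; rewrite inE ffunE; case: ifP => //; rewrite eqxx.
    by move=> k kK; rewrite ffunE kK unfold_in /= inordK.
  have : y \notin [set y in D | ~~ has (fun A => cov A y) hs].
    by rewrite (cards0_eq u0) inE.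
  rewrite inE yD /= negbK => /hasP [A hA hcov].
  exists A => // k kA.
  have : A.1 \in map fst hs by apply: map_f.
  rewrite hmap mem_enum inE => /andP[AK _].
  move/forallP: hcov => /(_ k); rewrite kA /= ffunE (subsetP AK k kA) inordK //.
  by move/eqP.
Qed.
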